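(* Let $X\subseteq Y$ be FK-spaces containing $\phi$. Then $E(X)\subseteq E(Y)$ for each of $E=D_p^qS,\ D_p^qW,\ D_p^qF,\ D_p^qF^+,\ D_p^qB,\ D_p^qB^+$.
   Context: An FK-space is a vector subspace of the space $w$ of all complex sequences with a complete metrizable locally convex topology in which coordinate functionals are continuous; $X'$ is its continuous dual. $\delta^j$ has $1$ in position $j$, $0$ elsewhere; $\phi=\operatorname{span}\{\delta^j\}$. $p(n)<q(n)$ are nonnegative integer sequences with $q(n)\to\infty$. For $x\in w$, $x^{(k)}=\sum_{j=1}^kx_j\delta^j$ and $T_n(x)=\frac{1}{q(n)-p(n)}\sum_{k=p(n)+1}^{q(n)}x^{(k)}$. For an FK-space $X\supseteq\phi$: $D_p^qS(X)=\{x\in X: T_n(x)\to x \text{ in } X\}$; $D_p^qW(X)=\{x\in X: f(T_n(x))\to f(x)\ \forall f\in X'\}$; $D_p^qF^+(X)=\{x\in w: \lim_n f(T_n(x))\text{ exists }\forall f\in X'\}$; $D_p^qB^+(X)=\{x\in w:\sup_n|f(T_n(x))|<\infty\ \forall f\in X'\}$; $D_p^qF(X)=D_p^qF^+(X)\cap X$; $D_p^qB(X)=D_p^qB^+(X)\cap X$. *)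

(* Defs.v *)
(* Complex scalars: C := R[i] (real_closed's complex numbers) over an
   arbitrary realType R (every realType is isomorphic to the reals). *)
From HB Require Import structures.
From mathcomp Require Import all_boot all_order all_algebra.
From mathcomp Require Import complex.
From mathcomp Require Import all_classical all_reals.
From mathcomp Require Import topology normedtype tvs.
Set Implicit Arguments. Unset Strict Implicit. Unset Printing Implicit Defensive.
Import Order.TTheory GRing.Theory Num.Theory.
Import numFieldTopology.Exports numFieldNormedType.Exports.
Local Open Scope classical_set_scope.
Local Open Scope ring_scope.

(* Equip C = R[i] with its usual (modulus) metric topology, as for any
   numFieldType (the generic instance is not found automatically for the
   concrete type constructor complex). *)
HB.instance Definition _ (R : realType) :=
  PseudoPointedMetric.copy (R[i]) (R[i])^o.

Section FK.
Variable R : realType.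
Local Notation C := (R[i]).

(* the space w of all complex sequences; the paper's coordinate x_j
   (j >= 1) is stored at index j-1, i.e. x : nat -> C, x_j = x (j.-1). *)
Definition w := nat -> C.

Definition delta (j : nat) : w := fun i => if i == j.-1 then 1 else 0.

(* x^{(k)} = sum_{j=1}^k x_j delta^j : keeps coordinates 1..k *)
Definition sect (k : nat) (x : w) : w := fun i => if (i < k)%N then x i else 0.

Definition Tn (p q : nat -> nat) (n : nat) (x : w) : w :=
  fun i => ((q n - p n)%:R)^-1 * \sum_((p n).+1 <= k < (q n).+1) sect k x i.

(* An FK-space is represented by a locally convex topological vector space
   E over C (a tvsType, whose uniformity is the canonical one of the
   topological group E) together with a linear injection iota : E -> w;
   the subspace of w is range iota, carrying the topology transported
   from E. *)
Definition is_FK (E : tvsType C) (iota : E -> w) : Prop :=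
  [/\ (forall (a : C) (u v : E) (i : nat), iota (a *: u + v) i = a * iota u i + iota v i),
      injective iota,
      (forall i : nat, continuous (fun v : E => iota v i)),
      countable_uniformity E                        (* metrizable *)
    & (forall F : set_system E, ProperFilter F -> cauchy F -> exists x : E, F --> x)
    ].

Definition contains_phi (E : tvsType C) (iota : E -> w) : Prop :=
  forall j : nat, (0 < j)%N -> exists v : E, iota v = delta j.

Definition dual (E : tvsType C) (f : E -> C) : Prop :=
  (forall (a : C) (u v : E), f (a *: u + v) = a * f u + f v) /\ continuous f.

Definition reprT (E : tvsType C) (iota : E -> w) (p q : nat -> nat)
  (x : w) (v : nat -> E) : Prop := forall n, iota (v n) = Tn p q n x.

Definition DS (E : tvsType C) (iota : E -> w) (p q : nat -> nat) : set w :=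
  [set x | exists v0 : E, iota v0 = x /\
     exists v : nat -> E, reprT iota p q x v /\ v n @[n --> \oo] --> v0].

Definition DW (E : tvsType C) (iota : E -> w) (p q : nat -> nat) : set w :=
  [set x | exists v0 : E, iota v0 = x /\
     exists v : nat -> E, reprT iota p q x v /\
       forall f : E -> C, dual f -> f (v n) @[n --> \oo] --> f v0].

Definition DFplus (E : tvsType C) (iota : E -> w) (p q : nat -> nat) : set w :=
  [set x | exists v : nat -> E, reprT iota p q x v /\
       forall f : E -> C, dual f -> exists l : C, f (v n) @[n --> \oo] --> l].

Definition DBplus (E : tvsType C) (iota : E -> w) (p q : nat -> nat) : set w :=
  [set x | exists v : nat -> E, reprT iota p q x v /\
       forall f : E -> C, dual f -> exists M : C, forall n, `|f (v n)| <= M].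

Definition DF (E : tvsType C) (iota : E -> w) (p q : nat -> nat) : set w :=
  DFplus iota p q `&` range iota.

Definition DB (E : tvsType C) (iota : E -> w) (p q : nat -> nat) : set w :=
  DBplus iota p q `&` range iota.

End FK.

(* Main.v *)
Require Import Defs.
From HB Require Import structures.
From mathcomp Require Import all_boot all_order all_algebra.
From mathcomp Require Import complex.
From mathcomp Require Import all_classical all_reals.
From mathcomp Require Import topology normedtype tvs.
Import Order.TTheory GRing.Theory Num.Theory.
Import numFieldNormedType.Exports.
Local Open Scope classical_set_scope.
Local Open Scope ring_scope.
Lemma seq_cauchy (T : uniformType) (u : nat -> T) :
  (forall A, entourage A -> exists N, forall m n, (N <= m)%N -> (N <= n)%N -> A (u m, u n)) ->
  cauchy (u @ \oo).
Proof.
move=> H A eA. have [N HN] := H A eA.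
exists (u @` [set m | (N <= m)%N], u @` [set m | (N <= m)%N]) => /=.
  split; exists N => // m Hm /=; exists m => //.
by move=> [a b] /= [[m Hm <-] [n Hn <-]]; apply: HN.
Qed.
Local Open Scope relation_scope.
Lemma ev_ex {P : nat -> Prop} : (\forall n \near \oo, P n) -> exists N, forall n, (N <= n)%N -> P n.
Proof. by case=> N _ HN; exists N => n Hn; apply: HN. Qed.

Lemma baire (T : uniformType) (cu : countable_uniformity T)
  (cpl : forall F : set_system T, ProperFilter F -> cauchy F -> exists x : T, F --> x)
  (x0 : T) (O : nat -> set T) :
  (forall k, open (O k)) -> (forall k (z : T) U, nbhs z U -> exists z', U z' /\ O k z') ->
  exists z, forall k, O k z.
Proof.
move=> Oo Od.
have [f fsub fent] := iffLR countable_uniformityP cu.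
pose Inv k (p : T * set (T * T)) := [/\ entourage p.2,
  (forall y z, p.2 (p.1, z) -> p.2 (z, y) -> O k y) &
  (forall a b c, p.2 (a, b) -> p.2 (a, c) -> f k (b, c))].
have mk : forall k z1 A1, entourage A1 -> xsection A1 z1 `<=` O k -> forall E1, entourage E1 ->
   exists D, [/\ entourage D, D `<=` E1, (forall y z, D (z1, z) -> D (z, y) -> O k y) &
     (forall a b c, D (a, b) -> D (a, c) -> f k (b, c))].
  move=> k z1 A1 eA1 sA1 E1 eE1.
  pose S := split_ent (f k).
  have eS : entourage S by apply: entourage_split_ent.
  exists (split_ent A1 `&` E1 `&` (S `&` S^-1)); split.
  - apply: filterI; last exact: entourage_invI.
    by apply: filterI => //; exact: entourage_split_ent.
  - by move=> x [[]].
  - move=> y z [[h1 _] _] [[h2 _] _]; apply: sA1; apply/xsectionP.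
    exact: (entourage_split z).
  - move=> a b c [_ [_ h1]] [_ [h2 _]]; exact: (entourage_split a).
have init : exists p, Inv 0%N p.
  have [z1 [_ Oz1]] := Od 0%N x0 setT filterT.
  have /nbhsP [A1 eA1 sA1] : nbhs z1 (O 0%N) by move: (Oo 0%N); rewrite openE; apply.
  have [D [eD _ H1 H2]] := mk 0%N z1 A1 eA1 sA1 setT entourageT.
  by exists (z1, D); split.
have step : forall kp : nat * (T * set (T * T)), exists p',
    Inv kp.1 kp.2 -> Inv kp.1.+1 p' /\
      (forall y z, p'.2 (p'.1, z) -> p'.2 (z, y) -> kp.2.2 (kp.2.1, y)).
  move=> [k [z D]] /=.
  have [/= Hi|] := pselect (Inv k (z, D)); last by move=> H; exists (z, D).
  case: Hi => /= eD _ _.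
  pose E1 := split_ent D.
  have eE1 : entourage E1 by apply: entourage_split_ent.
  have [z1 [/xsectionP Ez1 Oz1]] := Od k.+1 z _ (nbhs_entourage z eE1).
  have /nbhsP [A1 eA1 sA1] : nbhs z1 (O k.+1) by move: (Oo k.+1); rewrite openE; apply.
  have [D' [eD' sD' H1 H2]] := mk k.+1 z1 A1 eA1 sA1 (split_ent E1) (entourage_split_ent eE1).
  exists (z1, D') => _; split; first by split.
  move=> y w /= h1 h2; apply: (entourage_split z1) => //.
  by apply: (entourage_split w) => //; apply: sD'.
have [g Hg] := choice step.
have [p0 Hp0] := init.
pose P := fix P n := if n is n.+1 then g (n, P n) else p0.
have HP : forall n, Inv n (P n) by elim=> [|n IH] //=; have [] := Hg (n, P n) IH.
have Hnest : forall n y z, (P n.+1).2 ((P n.+1).1, z) -> (P n.+1).2 (z, y) -> (P n).2 ((P n).1, y).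
  by move=> n; have [] := Hg (n, P n) (HP n).
have Hd : forall d k, (P k).2 ((P k).1, (P (k + d)%N).1).
  elim=> [|d IH] k; first by rewrite addn0; apply: entourage_refl; case: (HP k).
  rewrite -addSnnS; apply: (Hnest k _ ((P k.+1).1)) => //.
  by apply: entourage_refl; case: (HP k.+1).
pose u n := (P n).1.
have cu' : cauchy (u @ \oo).
  apply: seq_cauchy => A eA; have [N sN] := fsub A eA.
  exists N => m n Hm Hn; apply: sN.
  case: (HP N) => _ _ H3; apply: (H3 (P N).1).
    by rewrite -(subnKC Hm); apply: Hd.
  by rewrite -(subnKC Hn); apply: Hd.
have [z Hz] := cpl _ _ cu'.
exists z => k.
case: (HP k) => eD H2 _.
have HN0 : \forall n \near \oo, (P k).2^-1 (z, u n).
  exact: (cvg_entourage Hz (entourage_inv eD)).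
have [N HN] := ev_ex HN0.
apply: (H2 z (u (maxn N k))).
  by rewrite /u -(subnKC (leq_maxr N k)); apply: Hd.
exact: HN (leq_maxl N k).
Qed.

Local Close Scope relation_scope.

Section tvs_helpers.
Variables (K : numFieldType) (E : tvsType K).

Lemma nbhs_split (V : set E) : nbhs 0 V ->
  exists2 W : set E, nbhs 0 W & forall a b, W a -> W b -> V (a + b).
Proof.
move=> HV; have := @add_continuous E (0, 0) V; rewrite /= addr0 => /(_ HV).
move=> [[B1 B2]] /= [h1 h2] HB; exists (B1 `&` B2); first exact: filterI.
by move=> a b [a1 _] [_ b2]; apply: (HB (a, b)).
Qed.

Lemma nbhs_splitB (V : set E) : nbhs 0 V ->
  exists2 W : set E, nbhs 0 W & forall a b, W a -> W b -> V (a - b).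
Proof.
move=> HV; have := @sub_continuous E (0, 0) V; rewrite /= subr0 => /(_ HV).
move=> [[B1 B2]] /= [h1 h2] HB; exists (B1 `&` B2); first exact: filterI.
by move=> a b [a1 _] [_ b2]; apply: (HB (a, b)).
Qed.

Lemma nbhs_to0 (x : E) (U : set E) : nbhs x U -> nbhs 0 (fun u => U (x + u)).
Proof.
move=> HU; have := @add_continuous E (x, 0) U; rewrite /= addr0 => /(_ HU).
move=> [[B1 B2]] /= [h1 h2] HB; apply: filterS h2 => u Bu.
by apply: (HB (x, u)); split => //=; exact: nbhs_singleton.
Qed.

Lemma nbhs_from0 (x : E) (W : set E) : nbhs 0 W -> nbhs x (fun y => W (y - x)).
Proof.
move=> HW; have := @sub_continuous E (x, x) W; rewrite /= subrr => /(_ HW).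
move=> [[B1 B2]] /= [h1 h2] HB; apply: filterS h1 => y By.
by apply: (HB (y, x)); split => //=; exact: nbhs_singleton.
Qed.

End tvs_helpers.
Arguments nbhs_split {K E V}.
Arguments nbhs_splitB {K E V}.
Arguments nbhs_to0 {K E x U}.
Arguments nbhs_from0 {K E} x {W}.

Lemma seq_cvgP (T : topologicalType) (t : nat -> T) (y : T) :
  t @ \oo --> y <-> forall U, nbhs y U -> exists N, forall n, (N <= n)%N -> U (t n).
Proof.
split.
  by move=> H U HU; have := H U HU; case=> N _ HN; exists N => n Hn; apply: HN.
by move=> H U HU; have [N HN] := H U HU; exists N => // n Hn; apply: HN.
Qed.

Lemma klee (K : numFieldType) (E : tvsType K) (cu : countable_uniformity E)
  (cpl : forall F : set_system E, ProperFilter F -> cauchy F -> exists x : E, F --> x)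
  (t : nat -> E) :
  (forall U : set E, nbhs 0 U -> exists N, forall m n, (N <= m)%N -> (N <= n)%N -> U (t m - t n)) ->
  exists y : E, t @ \oo --> y.
Proof.
move=> Ht.
have [f fsub fent] := iffLR countable_uniformityP cu.
pose G k (z : E) := exists2 W : set E, nbhs 0 W & exists M, forall a b n m,
  W a -> W b -> (M <= n)%N -> (M <= m)%N -> f k (z + a + t n, z + b + t m).
have Go : forall k, open (G k).
  move=> k; rewrite openE => z [W HW [M HM]].
  have [W' HW' sW'] := nbhs_split HW.
  apply: filterS (nbhs_from0 z HW') => y Hy; exists W' => //; exists M.
  move=> a b n m Ha Hb Hn Hm.
  have e1 : y + a = z + (y - z + a) by rewrite addrA [z + _]addrC subrK.
  have e2 : y + b = z + (y - z + b) by rewrite addrA [z + _]addrC subrK.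
  rewrite e1 e2; apply: HM => //; exact: sW'.
have Gd : forall k (z0 : E) U, nbhs z0 U -> exists z', U z' /\ G k z'.
  move=> k z0 U HU.
  have [N1 HN1] := Ht _ (nbhs_to0 HU).
  pose e := z0 + t N1.
  pose S := split_ent (f k).
  have eS : entourage S by apply: entourage_split_ent.
  have HW0 := nbhs_to0 (nbhs_entourage e (entourage_invI eS)).
  have [W1 HW1 sW1] := nbhs_split HW0.
  have [M1 HM1] := Ht _ HW1.
  pose M := maxn M1 N1.
  exists (z0 + (t N1 - t M)); split.
    by apply: HN1 => //; rewrite leq_maxr.
  exists W1 => //; exists M => a b n m Ha Hb Hn Hm.
  have eq1 : forall c p, z0 + (t N1 - t M) + c + t p = e + (c + (t p - t M)).
    move=> c p; rewrite /e.
    by rewrite -!addrA; congr (_ + (_ + _)); rewrite addrC -addrA.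
  rewrite !eq1.
  have hM1 : (M1 <= M)%N by rewrite leq_maxl.
  have /xsectionP [_ h1] := sW1 _ _ Ha (HM1 n M (leq_trans hM1 Hn) hM1).
  have /xsectionP [h2 _] := sW1 _ _ Hb (HM1 m M (leq_trans hM1 Hm) hM1).
  exact: (entourage_split e).
have [z Hz] := @baire E cu cpl 0 G Go Gd.
have cz : cauchy ((fun n => z + t n) @ \oo).
  apply: seq_cauchy => A eA; have [k sk] := fsub A eA.
  have [W HW [M HM]] := Hz k.
  exists M => m n Hm Hn; apply: sk.
  have := HM 0 0 m n (nbhs_singleton HW) (nbhs_singleton HW) Hm Hn.
  by rewrite !addr0.
have [w Hw] := cpl _ _ cz.
exists (w - z); apply/seq_cvgP => U HU.
have H0 := nbhs_from0 w (nbhs_to0 HU).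
have [N HN] := iffLR (seq_cvgP _ _ _) Hw _ H0.
exists N => n Hn; have := HN n Hn.
by rewrite addrC addrA subrK [z + _]addrC addrK.
Qed.
Lemma small_inv (R : realType) (B : set (R[i])^o) : nbhs (0 : (R[i])^o) B ->
  exists n : nat, B ((n.+1%:R : R[i])^-1).
Proof.
move=> /nbhs_ballP [e e0 He].
have [/eqP Ime Ree] : (complex.Im e == complex.Im 0) /\ (complex.Re 0 < complex.Re e).
  by have h : (0 : R[i]) < e := e0; move: h; rewrite ltcE => /andP.
exists (Num.truncn (complex.Re e)^-1); apply: He.
rewrite -ball_normE /= sub0r normrN.
have -> : (Num.truncn (complex.Re e)^-1).+1%:R = real_complex R ((Num.truncn (complex.Re e)^-1).+1%:R : R) by rewrite rmorph_nat.
rewrite -fmorphV /=.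
rewrite ger0_norm; last by rewrite ler0c invr_ge0.
rewrite ltcE /= Ime eqxx /=.
rewrite -ltf_pV2 ?posrE ?invr_gt0 //.
by rewrite invrK truncnS_gt.
Qed.

Lemma nbhs_scale (K : numFieldType) (E : tvsType K) (c : K) (Q : set E) :
  nbhs 0 Q -> nbhs 0 (fun u => Q (c *: u)).
Proof.
move=> HQ; have := @scale_continuous K E (c, 0) Q; rewrite /= scaler0 => /(_ HQ).
move=> [[B1 B2]] /= [h1 h2] HB; apply: filterS h2 => u Bu.
by apply: (HB (c, u)); split => //=; exact: nbhs_singleton.
Qed.

Lemma nbhs_absorb (R : realType) (E : tvsType R[i]) (y : E) (W : set E) :
  nbhs 0 W -> exists n : nat, W ((n.+1%:R : R[i])^-1 *: y).
Proof.
move=> HW; have := @scale_continuous _ E (0, y) W; rewrite /= scale0r => /(_ HW).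
move=> [[B1 B2]] /= [h1 h2] HB.
have [n Hn] := @small_inv R B1 h1.
by exists n; apply: (HB (_, y)); split => //=; exact: nbhs_singleton.
Qed.

Lemma nbhs_to0N (K : numFieldType) (E : tvsType K) (x : E) (U : set E) :
  nbhs x U -> nbhs 0 (fun u => U (x - u)).
Proof.
move=> HU; have := @sub_continuous E (x, 0) U; rewrite /= subr0 => /(_ HU).
move=> [[B1 B2]] /= [h1 h2] HB; apply: filterS h2 => u Bu.
by apply: (HB (x, u)); split => //=; exact: nbhs_singleton.
Qed.

Arguments nbhs_scale {K E} c {Q}.
Arguments nbhs_absorb {R E} y {W}.
Arguments nbhs_to0N {K E x U}.

Lemma zmod_id2 (G : zmodType) (a d x1 x2 : G) : a + d - x1 - (a - x2) = d - (x1 - x2).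
Proof. by rewrite !opprB addrC !addrA subrK [x2 + d]addrC. Qed.

Lemma zmod_id1 (G : zmodType) (a b c : G) : (a - c) - (a - b) = b - c.
Proof. by rewrite opprB addrC addrA subrK. Qed.

Section closed_graph.
Variable R : realType.
Local Notation C := (R[i]).
Variables (EX EY : tvsType C).
Hypothesis cuX : countable_uniformity EX.
Hypothesis cplX : forall F : set_system EX, ProperFilter F -> cauchy F -> exists x : EX, F --> x.
Hypothesis cuY : countable_uniformity EY.
Hypothesis cplY : forall F : set_system EY, ProperFilter F -> cauchy F -> exists x : EY, F --> x.
Variable J : EX -> EY.
Hypothesis Jlin : forall a u v, J (a *: u + v) = a *: J u + J v.

Lemma JD u v : J (u + v) = J u + J v.
Proof. by rewrite -[u in LHS]scale1r Jlin scale1r. Qed.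
Lemma J0 : J 0 = 0.
Proof. by apply: (@addrI _ (J 0)); rewrite addr0 -JD addr0. Qed.
Lemma JZ a u : J (a *: u) = a *: J u.
Proof. by rewrite -[a *: u]addr0 Jlin J0 addr0. Qed.
Lemma JN u : J (- u) = - J u.
Proof. by rewrite -scaleN1r JZ scaleN1r. Qed.
Lemma JB u v : J (u - v) = J u - J v.
Proof. by rewrite JD JN. Qed.

Lemma step1 (V : set EY) : nbhs 0 V -> exists2 B : set EX, nbhs 0 B &
  forall x, B x -> forall Q : set EX, nbhs 0 Q -> exists x', V (J x') /\ Q (x - x').
Proof.
move=> HV; have [W HW sW] := nbhs_splitB HV.
pose CL (x : EX) := forall Q : set EX, nbhs 0 Q -> exists x', W (J x') /\ Q (x - x').
pose s (n : nat) := (n.+1%:R : C)^-1.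
pose A n x := CL (s n *: x).
have [[n [p Hp]]|Hno] := pselect (exists n (p : EX), nbhs p (A n)); last first.
  exfalso.
  pose O n x := ~ A n x.
  have Oo : forall n, open (O n).
    move=> n; rewrite openE => x Hx.
    have : exists Q : set EX, nbhs 0 Q /\ forall x', W (J x') -> ~ Q (s n *: x - x').
      apply: contrapT => H; apply: Hx => Q HQ; apply: contrapT => H2; apply: H.
      by exists Q; split => // x' Wx' Qx'; apply: H2; exists x'.
    move=> [Q [HQ HQn]].
    have [Q' HQ' sQ'] := nbhs_splitB HQ.
    rewrite /interior /=; apply: filterS (nbhs_from0 x (nbhs_scale (s n) HQ')) => y Hy Ay.
    have [x' [Wx' Qx']] := Ay Q' HQ'.
    apply: (HQn x' Wx').
    by have := sQ' _ _ Qx' Hy; rewrite scalerBr zmod_id1.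
  have Od : forall n (z : EX) U, nbhs z U -> exists z', U z' /\ O n z'.
    move=> n z U HU; apply: contrapT => H; apply: Hno; exists n, z.
    apply: filterS HU => y Uy; apply: contrapT => Ny; apply: H.
    by exists y.
  have [x0 Hx0] := @baire EX cuX cplX 0 O Oo Od.
  have [n Hn] := nbhs_absorb (J x0) HW.
  apply: (Hx0 n) => Q HQ; exists (s n *: x0); split; first by rewrite JZ.
  by rewrite subrr; exact: nbhs_singleton.
pose c : C := n.+1%:R.
have c0 : c != 0 by rewrite /c pnatr_eq0.
exists (fun d => A n (p + c *: d)).
  exact: (nbhs_scale c (nbhs_to0 Hp)).
move=> d Bd Q HQ.
have [Q' HQ' sQ'] := nbhs_splitB HQ.
have [x1 [W1 Q1]] := Bd Q' HQ'.
have [x2 [W2 Q2]] := (nbhs_singleton Hp) Q' HQ'.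
exists (x1 - x2); split; first by rewrite JB; exact: sW.
have := sQ' _ _ Q1 Q2.
rewrite scalerDr scalerA mulVf // scale1r.
by rewrite zmod_id2.
Qed.

Hypothesis Jcl : forall (s : nat -> EX) (x : EX) (y : EY),
  s @ \oo --> x -> (fun n => J (s n)) @ \oo --> y -> y = J x.

Lemma base_dec (E : tvsType C) (f : nat -> set (E * E)) :
  (forall n, entourage (f n)) ->
  forall k, nbhs (0 : E) (fun x => forall i, (i <= k)%N -> f i (0, x)).
Proof.
move=> fent; elim=> [|k IH].
  apply: filterS (nbhs_entourage 0 (fent 0%N)) => x /xsectionP Hx i.
  by rewrite leqn0 => /eqP ->.
apply: filterS (filterI IH (nbhs_entourage 0 (fent k.+1))) => x [H1 /xsectionP H2] i.
by rewrite leq_eqVlt ltnS => /orP [/eqP -> //|]; apply: H1.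
Qed.

Lemma J_nbhs0 (V : set EY) : nbhs 0 V -> nbhs 0 (fun x => V (J x)).
Proof.
move=> HV.
have [fX fXsub fXent] := iffLR countable_uniformityP cuX.
have [fY fYsub fYent] := iffLR countable_uniformityP cuY.
pose bX k := fun x : EX => forall i, (i <= k)%N -> fX i (0, x).
have HbX := @base_dec EX fX fXent.
have bXsmall : forall U : set EX, nbhs 0 U -> exists k, forall n, (k <= n)%N -> bX n `<=` U.
  move=> U /nbhsP [A eA sA]; have [k sk] := fXsub A eA.
  by exists k => n kn x Hx; apply: sA; apply/xsectionP; apply: sk; apply: Hx.
have bYsmall : forall U : set EY, nbhs 0 U -> exists k, (fun y => fY k (0, y)) `<=` U.
  move=> U /nbhsP [A eA sA]; have [k sk] := fYsub A eA.
  by exists k => y Hy; apply: sA; apply/xsectionP; apply: sk.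
have [N0 HN0 sN0] := nbhs_splitB HV.
have stepN : forall kU : nat * set EY, exists U', nbhs 0 kU.2 ->
    [/\ nbhs 0 U', forall a b, U' a -> U' b -> kU.2 (a + b) & U' `<=` (fun y => fY kU.1 (0, y))].
  move=> [k U] /=; have [/= HU|] := pselect (nbhs 0 U); last by move=> H; exists U.
  have [U1 HU1 sU1] := nbhs_split HU.
  exists (U1 `&` (fun y => fY k (0, y))) => _; split.
  - apply: filterI => //; apply: filterS (nbhs_entourage 0 (fYent k)).
    by move=> y /xsectionP.
  - by move=> a b [] + _ [] + _; apply: sU1.
  - by move=> y [].
have [g Hg] := choice stepN.
pose N := fix N k := if k is k.+1 then g (k, N k) else N0.
have HN : forall k, nbhs 0 (N k) by elim=> [|k IH] //=; have [] := Hg (k, N k) IH.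
have sN : forall k a b, N k.+1 a -> N k.+1 b -> N k (a + b).
  by move=> k; have [] := Hg (k, N k) (HN k).
have bN : forall k, N k.+1 `<=` (fun y => fY k (0, y)).
  by move=> k; have [] := Hg (k, N k) (HN k).
have decN : forall k, N k.+1 `<=` N k.
  move=> k y Hy; rewrite -[y]addr0; apply: sN => //; exact: nbhs_singleton (HN k.+1).
have decN' : forall k m, (k <= m)%N -> N m `<=` N k.
  move=> k m /subnKC <-; elim: (m - k)%N => [|d IH]; first by rewrite addn0.
  by rewrite addnS; apply: subset_trans IH; apply: decN.
have stepB : forall V' : set EY, exists B : set EX, nbhs 0 V' -> nbhs 0 B /\
    forall x, B x -> forall Q : set EX, nbhs 0 Q -> exists x', V' (J x') /\ Q (x - x').
  move=> V'; have [HV'|] := pselect (nbhs 0 V'); last by move=> H; exists setT.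
  by have [B HB HB2] := @step1 V' HV'; exists B.
have [h Hh] := choice stepB.
pose B k := h (N k.+1) `&` bX k.
have HB : forall k, nbhs 0 (B k) by move=> k; apply: filterI (HbX k); case: (Hh _ (HN k.+1)).
apply: filterS (HB 0%N) => x Bx.
have pickP : forall kr : nat * EX, exists x', B kr.1 kr.2 ->
    N kr.1.+1 (J x') /\ B kr.1.+1 (kr.2 - x').
  move=> [k r] /=; have [Br|] := pselect (B k r); last by move=> H; exists 0.
  have [_ H2] := Hh _ (HN k.+1).
  have [x' [H3 H4]] := H2 r Br.1 _ (HB k.+1).
  by exists x'.
have [pk Hpk] := choice pickP.
pose r := fix r k := if k is k.+1 then r k - pk (k, r k) else x.
have Hr : forall k, B k (r k) by elim=> [|k IH] //=; have [] := Hpk (k, r k) IH.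
have Hx' : forall k, N k.+1 (J (pk (k, r k))) by move=> k; have [] := Hpk (k, r k) (Hr k).
pose t k := J (x - r k).
have tS : forall k, t k.+1 - t k = J (pk (k, r k)).
  by move=> k; rewrite /t -JB zmod_id1 /= opprB addrC subrK.
have tP : forall m n, N n (t (n + m)%N - t n).
  elim=> [|m IH] n; first by rewrite addn0 subrr; exact: nbhs_singleton (HN n).
  rewrite -addSnnS.
  have -> : t (n.+1 + m)%N - t n = (t n.+1 - t n) + (t (n.+1 + m)%N - t n.+1).
    by rewrite [RHS]addrC addrA subrK.
  by apply: sN; [rewrite tS; apply: Hx'|apply: IH].
have tC : forall U : set EY, nbhs 0 U -> exists K, forall m n, (K <= m)%N -> (K <= n)%N -> U (t m - t n).
  move=> U HU; have [W HW sW] := nbhs_splitB HU.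
  have [k sk] := bYsmall W HW.
  exists k.+1 => m n Hm Hn.
  have -> : t m - t n = (t m - t k.+1) - (t n - t k.+1).
    by rewrite opprB addrA subrK.
  apply: sW; apply: sk; apply: bN; [rewrite -(subnKC Hm)|rewrite -(subnKC Hn)]; exact: tP.
have [y Hy] := @klee _ EY cuY cplY t tC.
have sx : (fun k => x - r k) @ \oo --> x.
  apply/seq_cvgP => U HU.
  have [k sk] := bXsmall _ (nbhs_to0N HU).
  by exists k => n kn; apply: (sk n kn); case: (Hr n).
have yx := Jcl _ _ _ sx Hy.
have t0 : forall m, N0 (t m).
  move=> m; have := tP m 0%N; rewrite add0n /t subrr J0 subr0.
  exact: id.
have [K HK] := iffLR (seq_cvgP _ _ _) Hy _ (nbhs_from0 y HN0).
rewrite -yx; have := sN0 _ _ (t0 K) (HK K (leqnn K)).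
by rewrite opprB addrC subrK.
Qed.

Lemma J_cont : continuous J.
Proof.
move=> x U HU.
have H1 := J_nbhs0 _ (nbhs_to0 HU).
apply: filterS (nbhs_from0 x H1) => y /=.
by rewrite -JD addrC subrK.
Qed.

End closed_graph.
Theorem mainTheorem7 (R : realType) (p q : nat -> nat)
  (hpq : forall n, (p n < q n)%N)
  (hq : forall M : nat, exists N : nat, forall n, (N <= n)%N -> (M <= q n)%N)
  (EX : tvsType (R[i])) (iX : EX -> w R)
  (EY : tvsType (R[i])) (iY : EY -> w R)
  (hX : is_FK iX) (hY : is_FK iY)
  (phiX : contains_phi iX) (phiY : contains_phi iY)
  (hXY : range iX `<=` range iY) :
  (DS iX p q `<=` DS iY p q) /\
  (DW iX p q `<=` DW iY p q) /\
  (DF iX p q `<=` DF iY p q) /\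
  (DFplus iX p q `<=` DFplus iY p q) /\
  (DB iX p q `<=` DB iY p q) /\
  (DBplus iX p q `<=` DBplus iY p q).
Proof.
case: hX => linX injX contX cuX cplX.
case: hY => linY injY contY cuY cplY.
have exJ : forall u : EX, exists v : EY, iY v = iX u.
  by move=> u; have [v _ hv] := hXY (iX u) (ex_intro2 _ _ u I erefl); exists v.
have [J HJ] := choice exJ.
have Jlin : forall a u v, J (a *: u + v) = a *: J u + J v.
  move=> a u v; apply: injY; apply/funext => i.
  by rewrite linY !HJ linX.
have Jcl : forall (s : nat -> EX) (x : EX) (y : EY),
    s @ \oo --> x -> (fun n => J (s n)) @ \oo --> y -> y = J x.
  move=> s x y hs hy; apply: injY; apply/funext => i; rewrite HJ.
  have h1 : (fun n => iX (s n) i) @ \oo --> iX x i.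
    exact: (cvg_comp _ _ hs (contX i x)).
  have h2 : (fun n => iY (J (s n)) i) @ \oo --> iY y i.
    exact: (cvg_comp _ _ hy (contY i y)).
  have h3 : (fun n => iY (J (s n)) i) = (fun n => iX (s n) i).
    by apply/funext => n; rewrite HJ.
  rewrite h3 in h2.
  by apply: (cvg_unique _ h2 h1); exact: (@norm_hausdorff _ (R[i])^o).
have Jc := @J_cont R EX EY cuX cplX cuY cplY J Jlin Jcl.
have dualJ : forall f : EY -> R[i], dual f -> dual (fun u => f (J u)).
  move=> f [f1 f2]; split; first by move=> a u v; rewrite Jlin f1.
  by move=> u; apply: continuous_comp; [exact: Jc|exact: f2].
have reprJ : forall x v, reprT iX p q x v -> reprT iY p q x (fun n => J (v n)).
  by move=> x v hv n; rewrite HJ hv.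
have Fp : DFplus iX p q `<=` DFplus iY p q.
  move=> x [v [hv hf]]; exists (fun n => J (v n)); split; first exact: reprJ.
  by move=> f df; exact: (hf _ (dualJ f df)).
have Bp : DBplus iX p q `<=` DBplus iY p q.
  move=> x [v [hv hf]]; exists (fun n => J (v n)); split; first exact: reprJ.
  by move=> f df; exact: (hf _ (dualJ f df)).
have rng : range iX `<=` range iY := hXY.
split.
  move=> x [v0 [hv0 [v [hv hc]]]]; exists (J v0); split; first by rewrite HJ.
  exists (fun n => J (v n)); split; first exact: reprJ.
  exact: (cvg_comp _ _ hc (Jc v0)).
split.
  move=> x [v0 [hv0 [v [hv hc]]]]; exists (J v0); split; first by rewrite HJ.
  exists (fun n => J (v n)); split; first exact: reprJ.
  by move=> f df; exact: (hc _ (dualJ f df)).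
split; first by move=> x [h1 h2]; split; [exact: Fp|exact: rng].
split; first exact: Fp.
split; first by move=> x [h1 h2]; split; [exact: Bp|exact: rng].
exact: Bp.
Qed.
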